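(* Let $Q:(-\infty,-1)\to(-\infty,0)$ be the inverse of the strictly increasing function $G\mapsto G-e^G$ on $(-\infty,0)$, and define $R:\mathbb{R}\to\mathbb{R}$ by $R(V)=-2(1-e^{Q(V)})^2$ for $V<-1$ and $R(V)=4(V+1)$ for $V\ge -1$. Fix $m<-1$. For $n\in\mathbb{R}$ let $V(t;n)$ denote the unique solution of $V''+3V'=R(V)$, $t>0$, $V(0)=m$, $V'(0)=n$ (prime denoting $d/dt$, $V_t=dV/dt$). Define $\beta^0=\{n\in\mathbb{R}: V_t(t;n)>0 \text{ and } V(t;n)\le -1 \text{ for all } t>0\}$. Then $\beta^0$ consists of exactly one point. *)

(* Defs.v *)
From Stdlib Require Import Reals Lra ClassicalEpsilon.
From Coquelicot Require Import Coquelicot.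
Open Scope R_scope.

(* Q V is some G < 0 with G - exp G = V (unique, since the map is strictly
   increasing on (-oo,0)); outside (-oo,-1) the value is irrelevant. *)
Definition Q (V : R) : R :=
  epsilon (inhabits 0) (fun G => G < 0 /\ G - exp G = V).

Definition Rfun (V : R) : R :=
  if Rlt_dec V (-1) then -2 * (1 - exp (Q V)) ^ 2 else 4 * (V + 1).

Definition is_sol (m n : R) (V Vt : R -> R) : Prop :=
  V 0 = m /\ Vt 0 = n /\
  (forall t, 0 <= t -> is_derive V t (Vt t)) /\
  (forall t, 0 <= t -> is_derive Vt t (Rfun (V t) - 3 * Vt t)).

Definition beta0 (m n : R) : Prop :=
  exists V Vt, is_sol m n V Vt /\
    (forall t, 0 < t -> 0 < Vt t /\ V t <= -1).

(* Main.v *)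
Require Import Defs.
From Stdlib Require Import Reals Lra Lia ClassicalEpsilon Classical.
From Coquelicot Require Import Coquelicot.
Open Scope R_scope.

Lemma cont_of_derive f x l : is_derive f x l -> continuity_pt f x.
Proof.
  intros H. apply continuity_pt_filterlim.
  apply (ex_derive_continuous (K:=R_AbsRing) (V:=R_NormedModule) f x). exists l; exact H.
Qed.

Lemma incr_deriv f df a b : a <= b ->
  (forall x, a <= x <= b -> is_derive f x (df x)) ->
  (forall x, a <= x <= b -> 0 <= df x) -> f a <= f b.
Proof.
  intros Hab Hd Hp.
  destruct (MVT_gen f a b df) as [c [Hc Hfc]].
  - intros x Hx. apply Hd. rewrite Rmin_left in Hx by lra. rewrite Rmax_right in Hx by lra. lra.
  - intros x Hx. apply (cont_of_derive _ _ (df x)). apply Hd.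
    rewrite Rmin_left in Hx by lra. rewrite Rmax_right in Hx by lra. lra.
  - rewrite Rmin_left in Hc by lra. rewrite Rmax_right in Hc by lra.
    assert (0 <= df c * (b - a)) by (apply Rmult_le_pos; [apply Hp; lra| lra]). lra.
Qed.

Lemma exp_le a b : a <= b -> exp a <= exp b.
Proof. intros H. destruct H as [H|H]. left; apply exp_increasing; auto. subst; lra. Qed.

Lemma h_mono a b : a <= b -> b <= 0 -> a - exp a <= b - exp b.
Proof.
  intros Hab Hb.
  assert (E : exp a = exp b * exp (a - b)) by (rewrite <- exp_plus; f_equal; ring).
  assert (H1 : 1 + (a - b) <= exp (a - b)) by apply exp_ineq1_le.
  assert (H2 : exp (a - b) <= 1) by (rewrite <- exp_0; apply exp_le; lra).
  assert (H3 : exp b <= 1) by (rewrite <- exp_0; apply exp_le; lra).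
  assert (H4 : 0 < exp b) by apply exp_pos.
  rewrite E. nra.
Qed.

Lemma Q_spec V : V < -1 -> Q V < 0 /\ Q V - exp (Q V) = V.
Proof.
  intros HV. unfold Q. apply epsilon_spec.
  destruct (IVT (fun G => G - exp G - V) V 0) as [z [Hz1 Hz2]].
  - intros x. apply (cont_of_derive _ _ (1 - exp x - 0)). auto_derive; auto; ring.
  - lra.
  - assert (0 < exp V) by apply exp_pos. lra.
  - rewrite exp_0. lra.
  - exists z. split.
    + destruct Hz1 as [_ [Hz|Hz]]; auto. subst. rewrite exp_0 in Hz2. lra.
    + lra.
Qed.

Lemma Rfun_lt V : V < -1 -> Rfun V = -2 * (1 - exp (Q V)) ^ 2.
Proof. intros H. unfold Rfun. destruct (Rlt_dec V (-1)); [reflexivity| lra]. Qed.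

Lemma Rfun_ge V : -1 <= V -> Rfun V = 4 * (V + 1).
Proof. intros H. unfold Rfun. destruct (Rlt_dec V (-1)); [lra| reflexivity]. Qed.

Lemma psi_mono G1 G2 : G1 <= G2 ->
  (exp G2 - exp G1) * (4 - exp G1 - exp G2) <= 2 * (G2 - G1).
Proof.
  intros H.
  assert (K := incr_deriv (fun G => G - 2 * exp G + exp G * exp G / 2)
     (fun G => (1 - exp G)^2) G1 G2 H).
  simpl in K.
  assert (G1 - 2 * exp G1 + exp G1 * exp G1 / 2 <= G2 - 2 * exp G2 + exp G2 * exp G2 / 2).
  { apply K. intros x _. auto_derive; auto; field. intros; rewrite Rmult_1_r; apply Rle_0_sqr. }
  nra.
Qed.

Lemma Q_mono V1 V2 : V1 <= V2 -> V2 < -1 -> Q V1 <= Q V2.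
Proof.
  intros H H2. destruct (Q_spec V1) as [A1 B1]; try lra. destruct (Q_spec V2) as [A2 B2]; auto.
  destruct (Rle_or_lt (Q V1) (Q V2)) as [h|h]; auto.
  assert (K := h_mono (Q V2) (Q V1) ltac:(lra) ltac:(lra)).
  destruct H as [H|H]; [lra| subst; lra].
Qed.

Lemma Rfun_mono x y : x <= y -> Rfun x <= Rfun y.
Proof.
  intros H.
  destruct (Rlt_dec y (-1)) as [hy|hy].
  - rewrite (Rfun_lt x) by lra. rewrite (Rfun_lt y) by lra.
    assert (K := Q_mono x y H hy). destruct (Q_spec x) as [A1 _]; try lra.
    destruct (Q_spec y) as [A2 _]; try lra.
    assert (exp (Q x) <= exp (Q y)) by (apply exp_le; auto).
    assert (exp (Q y) <= 1) by (rewrite <- exp_0; apply exp_le; lra).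
    assert (0 < exp (Q x)) by apply exp_pos.
    assert (0 <= (exp (Q y) - exp (Q x)) * (2 - exp (Q x) - exp (Q y))) by (apply Rmult_le_pos; lra).
    nra.
  - rewrite (Rfun_ge y) by lra.
    destruct (Rlt_dec x (-1)) as [hx|hx].
    + rewrite (Rfun_lt x) by lra. assert (0 <= (1 - exp (Q x))^2) by (apply pow2_ge_0). nra.
    + rewrite (Rfun_ge x) by lra. lra.
Qed.

Lemma Rfun_lip_aux x y : x <= y -> Rfun y - Rfun x <= 4 * (y - x).
Proof.
  intros H.
  destruct (Rlt_dec y (-1)) as [hy|hy].
  - rewrite (Rfun_lt x) by lra. rewrite (Rfun_lt y) by lra.
    assert (K := Q_mono x y H hy). destruct (Q_spec x) as [A1 B1]; try lra.
    destruct (Q_spec y) as [A2 B2]; try lra.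
    assert (P := psi_mono _ _ K). nra.
  - rewrite (Rfun_ge y) by lra.
    destruct (Rlt_dec x (-1)) as [hx|hx].
    + rewrite (Rfun_lt x) by lra. destruct (Q_spec x) as [A1 B1]; try lra.
      assert (P := psi_mono (Q x) 0 ltac:(lra)). rewrite exp_0 in P. nra.
    + rewrite (Rfun_ge x) by lra. lra.
Qed.

Lemma Rfun_lip x y : Rabs (Rfun x - Rfun y) <= 4 * Rabs (x - y).
Proof.
  destruct (Rle_or_lt x y) as [h|h].
  - assert (A := Rfun_lip_aux x y h). assert (B := Rfun_mono x y h).
    rewrite Rabs_left1 by lra. rewrite Rabs_left1 by lra. lra.
  - assert (A := Rfun_lip_aux y x ltac:(lra)). assert (B := Rfun_mono y x ltac:(lra)).
    rewrite Rabs_right by lra. rewrite Rabs_right by lra. lra.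
Qed.

Lemma Rfun_m1 : Rfun (-1) = 0.
Proof. rewrite Rfun_ge by lra. ring. Qed.

Lemma Rfun_neg V : V < -1 -> Rfun V < 0.
Proof.
  intros H. rewrite Rfun_lt by auto. destruct (Q_spec V) as [A _]; auto.
  assert (exp (Q V) < 1) by (rewrite <- exp_0; apply exp_increasing; lra). nra.
Qed.

Lemma Rfun_pos V : -1 < V -> 0 < Rfun V.
Proof. intros H. rewrite Rfun_ge by lra. lra. Qed.

Lemma Rfun_lb V : -2 <= Rfun V.
Proof.
  destruct (Rlt_dec V (-1)) as [h|h].
  - rewrite Rfun_lt by auto. destruct (Q_spec V) as [A _]; auto.
    assert (exp (Q V) < 1) by (rewrite <- exp_0; apply exp_increasing; lra).
    assert (0 < exp (Q V)) by apply exp_pos. nra.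
  - rewrite Rfun_ge by lra. lra.
Qed.

Lemma Rfun_cont x : continuous Rfun x.
Proof.
  intros P [eps He]. exists (mkposreal (eps / 5) ltac:(destruct eps; simpl; lra)).
  intros y Hy. apply He. change (Rabs (Rfun y - Rfun x) < eps).
  change (Rabs (y - x) < eps / 5) in Hy.
  assert (K := Rfun_lip y x). destruct eps; simpl in *. lra.
Qed.

Definition cont (f : R -> R) := forall t, continuous f t.

Lemma cont_eps f t : continuous f t <->
  (forall eps, 0 < eps -> exists d, 0 < d /\ forall s, Rabs (s - t) < d -> Rabs (f s - f t) < eps).
Proof.
  split.
  - intros H eps He.
    assert (L : locally (f t) (fun y => Rabs (y - f t) < eps)).
    { exists (mkposreal eps He). intros y Hy. exact Hy. }
    destruct (H _ L) as [d Hd]. exists d. split; [apply cond_pos|].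
    intros s Hs. apply Hd. exact Hs.
  - intros H P [eps He].
    destruct (H eps (cond_pos eps)) as [d [Hd1 Hd2]].
    exists (mkposreal d Hd1). intros y Hy. apply He. apply Hd2. exact Hy.
Qed.

Lemma cont_plus f g : cont f -> cont g -> cont (fun t => f t + g t).
Proof. intros Hf Hg t. apply (continuous_plus (V:=R_NormedModule) f g); auto. Qed.
Lemma cont_minus f g : cont f -> cont g -> cont (fun t => f t - g t).
Proof. intros Hf Hg t. apply (continuous_minus (V:=R_NormedModule) f g); auto. Qed.
Lemma cont_scal c f : cont f -> cont (fun t => c * f t).
Proof. intros Hf t. apply (continuous_mult (K:=R_AbsRing) (fun _ => c) f); auto. apply continuous_const. Qed.
Lemma cont_const c : cont (fun _ => c).
Proof. intros t. apply continuous_const. Qed.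
Lemma cont_Rfun f : cont f -> cont (fun t => Rfun (f t)).
Proof. intros Hf t. apply (continuous_comp f Rfun); auto. apply Rfun_cont. Qed.
Lemma cont_abs f : cont f -> cont (fun t => Rabs (f t)).
Proof. intros Hf t. apply continuous_Rabs_comp; auto. Qed.

Lemma exRInt g a b : cont g -> ex_RInt g a b.
Proof. intros H. apply (ex_RInt_continuous (V:=R_CompleteNormedModule)). intros; apply H. Qed.

Lemma RInt0_deriv g : cont g -> forall t, is_derive (fun t => RInt g 0 t) t (g t).
Proof.
  intros H t. apply (is_derive_RInt (V:=R_CompleteNormedModule) g (fun t => RInt g 0 t) 0 t); [| apply H].
  apply filter_forall; intros b. apply (RInt_correct (V:=R_CompleteNormedModule)). apply exRInt; auto.
Qed.

Lemma cont_RInt0 g c : cont g -> cont (fun t => c + RInt g 0 t).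
Proof.
  intros H t. apply (ex_derive_continuous (K:=R_AbsRing) (V:=R_NormedModule)).
  exists (0 + g t). apply (is_derive_plus (K:=R_AbsRing) (V:=R_NormedModule) (fun _ => c) (fun t => RInt g 0 t)).
  apply (is_derive_const (K:=R_AbsRing) (V:=R_NormedModule) c t). apply RInt0_deriv; auto.
Qed.

Lemma RInt_sub g1 g2 a b : cont g1 -> cont g2 ->
  RInt (fun s => g1 s - g2 s) a b = RInt g1 a b - RInt g2 a b.
Proof. intros H1 H2. apply (RInt_minus (V:=R_CompleteNormedModule)); apply exRInt; auto. Qed.

Lemma RInt_add g1 g2 a b : cont g1 -> cont g2 ->
  RInt (fun s => g1 s + g2 s) a b = RInt g1 a b + RInt g2 a b.
Proof. intros H1 H2. apply (RInt_plus (V:=R_CompleteNormedModule)); apply exRInt; auto. Qed.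

Lemma RInt_bound2 g1 g2 h t : 0 <= t -> cont g1 -> cont g2 -> cont h ->
  (forall s, 0 <= s <= t -> Rabs (g1 s) + Rabs (g2 s) <= h s) ->
  Rabs (RInt g1 0 t) + Rabs (RInt g2 0 t) <= RInt h 0 t.
Proof.
  intros Ht H1 H2 Hh Hb.
  assert (A1 := abs_RInt_le g1 0 t Ht (exRInt _ _ _ H1)).
  assert (A2 := abs_RInt_le g2 0 t Ht (exRInt _ _ _ H2)).
  assert (E := RInt_add (fun s => Rabs (g1 s)) (fun s => Rabs (g2 s)) 0 t
     (cont_abs _ H1) (cont_abs _ H2)).
  assert (RInt (fun s => Rabs (g1 s) + Rabs (g2 s)) 0 t <= RInt h 0 t).
  { apply RInt_le; auto. apply exRInt, cont_plus; apply cont_abs; auto.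
    apply exRInt; auto. intros; apply Hb; lra. }
  lra.
Qed.

Lemma RInt_cst c t : RInt (fun _ => c) 0 t = t * c.
Proof. rewrite RInt_const. unfold scal; simpl. unfold mult; simpl. ring. Qed.

Lemma RInt_poly C k t :
  RInt (fun s => 4 * C * (4 * s) ^ (S k) / INR (Factorial.fact (S k))) 0 t
  = C * (4 * t) ^ (S (S k)) / INR (Factorial.fact (S (S k))).
Proof.
  apply is_RInt_unique.
  assert (E : C * (4 * t) ^ S (S k) / INR (Factorial.fact (S (S k))) =
     minus (C * (4 * t) ^ S (S k) / INR (Factorial.fact (S (S k))))
           (C * (4 * 0) ^ S (S k) / INR (Factorial.fact (S (S k))))).
  { assert (Hz : (4 * 0) ^ S (S k) = 0) by (simpl; ring). rewrite Hz.
    unfold Rdiv. rewrite Rmult_0_r, Rmult_0_l. symmetry. apply (minus_zero_r (G:=R_AbelianGroup)). }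
  rewrite E. clear E.
  apply (is_RInt_derive (V:=R_CompleteNormedModule)
    (fun s => C * (4 * s) ^ S (S k) / INR (Factorial.fact (S (S k))))).
  - intros x _.
    assert (HF : INR (Factorial.fact (S (S k))) = INR (S (S k)) * INR (Factorial.fact (S k))).
    { rewrite fact_simpl. apply mult_INR. }
    assert (H1 : INR (Factorial.fact (S k)) <> 0) by apply INR_fact_neq_0.
    assert (H2 : INR (S (S k)) <> 0) by (apply not_0_INR; lia).
    rewrite HF. remember (INR (Factorial.fact (S k))) as D.
    remember (INR (S (S k))) as E. remember (S k) as j.
    apply (is_derive_ext (K:=R_AbsRing) (V:=R_NormedModule) (fun s => C / (E * D) * (4 * s) ^ S j)).
    { intros y. cbv beta. match goal with |- ?a = ?b => change (@eq R a b) end. field. split; auto. }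
    replace (4 * C * (4 * x) ^ j / D) with (C / (E * D) * (INR (S j) * 4 * (4 * x) ^ (pred (S j)))).
    2:{ simpl pred. rewrite HeqE, Heqj. field. split; auto. subst; auto. }
    apply (is_derive_scal (fun s => (4 * s) ^ S j)).
    apply (is_derive_pow (fun s => 4 * s) (S j) x 4).
    auto_derive; auto; ring.
  - intros x _. apply (ex_derive_continuous (K:=R_AbsRing) (V:=R_NormedModule)).
    auto_derive. auto.
Qed.

Ltac rreq := cbv beta; match goal with |- ?a = ?b => change (@eq R a b) end.

Fixpoint pic (m n : R) (k : nat) : (R -> R) * (R -> R) :=
  match k with
  | O => (fun _ => m, fun _ => n)
  | S k => (fun t => m + RInt (snd (pic m n k)) 0 t,
            fun t => n + RInt (fun s => Rfun (fst (pic m n k) s) - 3 * snd (pic m n k) s) 0 t)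
  end.

Definition PV m n k := fst (pic m n k).
Definition PW m n k := snd (pic m n k).

Lemma PV_S m n k t : PV m n (S k) t = m + RInt (PW m n k) 0 t.
Proof. reflexivity. Qed.
Lemma PW_S m n k t : PW m n (S k) t = n + RInt (fun s => Rfun (PV m n k s) - 3 * PW m n k s) 0 t.
Proof. reflexivity. Qed.
Lemma PV_0 m n t : PV m n 0 t = m. Proof. reflexivity. Qed.
Lemma PW_0 m n t : PW m n 0 t = n. Proof. reflexivity. Qed.

Lemma pic_cont m n k : cont (PV m n k) /\ cont (PW m n k).
Proof.
  induction k as [|k [IH1 IH2]].
  - split; [apply (cont_const m) | apply (cont_const n)].
  - split.
    + apply (cont_RInt0 (PW m n k) m); auto.
    + apply (cont_RInt0 (fun s => Rfun (PV m n k s) - 3 * PW m n k s) n).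
      apply cont_minus. apply cont_Rfun; auto. apply cont_scal; auto.
Qed.

Definition Kc m n := (Rabs n + Rabs (Rfun m - 3 * n)) / 4.

Lemma Kc_pos m n : 0 <= Kc m n.
Proof. unfold Kc. assert (0 <= Rabs n) by apply Rabs_pos.
  assert (0 <= Rabs (Rfun m - 3 * n)) by apply Rabs_pos. lra. Qed.

Lemma pic_bound m n k t : 0 <= t ->
  Rabs (PV m n (S k) t - PV m n k t) + Rabs (PW m n (S k) t - PW m n k t)
  <= Kc m n * (4 * t) ^ (S k) / INR (Factorial.fact (S k)).
Proof.
  revert t. induction k as [|k IH]; intros t Ht.
  - rewrite PV_S, PW_S. unfold PW, PV; simpl.
    rewrite !RInt_cst. unfold Kc. simpl.
    replace (m + t * n - m) with (t * n) by ring.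
    replace (n + t * (Rfun m - 3 * n) - n) with (t * (Rfun m - 3 * n)) by ring.
    rewrite !Rabs_mult, (Rabs_right t) by lra. lra.
  - destruct (pic_cont m n k) as [C1 C2]. destruct (pic_cont m n (S k)) as [C3 C4].
    rewrite (PV_S m n (S k)), (PV_S m n k), (PW_S m n (S k)), (PW_S m n k).
    replace (m + RInt (PW m n (S k)) 0 t - (m + RInt (PW m n k) 0 t))
      with (RInt (fun s => PW m n (S k) s - PW m n k s) 0 t)
      by (rewrite (RInt_sub (PW m n (S k)) (PW m n k)); auto; rreq; ring).
    set (g1 := fun s => Rfun (PV m n (S k) s) - 3 * PW m n (S k) s).
    set (g2 := fun s => Rfun (PV m n k s) - 3 * PW m n k s).
    assert (Cg1 : cont g1) by (apply cont_minus; [apply cont_Rfun; auto| apply cont_scal; auto]).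
    assert (Cg2 : cont g2) by (apply cont_minus; [apply cont_Rfun; auto| apply cont_scal; auto]).
    replace (n + RInt g1 0 t - (n + RInt g2 0 t)) with (RInt (fun s => g1 s - g2 s) 0 t)
      by (rewrite RInt_sub; auto; rreq; ring).
    rewrite <- RInt_poly.
    apply RInt_bound2; auto.
    + apply cont_minus; auto.
    + apply cont_minus; auto.
    + intros s. apply (ex_derive_continuous (K:=R_AbsRing) (V:=R_NormedModule)).
      auto_derive. auto.
    + intros s Hs. specialize (IH s ltac:(lra)).
      unfold g1, g2.
      assert (L := Rfun_lip (PV m n (S k) s) (PV m n k s)).
      replace (Rfun (PV m n (S k) s) - 3 * PW m n (S k) s - (Rfun (PV m n k s) - 3 * PW m n k s))
        with ((Rfun (PV m n (S k) s) - Rfun (PV m n k s)) + (-3) * (PW m n (S k) s - PW m n k s)) by ring.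
      assert (T := Rabs_triang (Rfun (PV m n (S k) s) - Rfun (PV m n k s)) ((-3) * (PW m n (S k) s - PW m n k s))).
      rewrite Rabs_mult in T. rewrite (Rabs_left (-3)) in T by lra.
      unfold Rdiv in *. lra.
Qed.

Definition aT m n T j := Kc m n * (4 * T) ^ (S j) / INR (Factorial.fact (S j)).

Lemma aT_ex m n T : ex_series (aT m n T).
Proof.
  assert (H := is_exp_Reals (4 * T)).
  assert (E : ex_series (fun k => scal (pow_n (4 * T) k) (/ INR (Factorial.fact k)))) by (eexists; exact H).
  apply ex_series_incr_1 in E.
  apply (ex_series_scal_l (Kc m n)) in E.
  refine (ex_series_ext _ _ _ E).
  intros j. unfold aT. rewrite pow_n_pow. unfold scal; simpl. unfold mult; simpl. unfold Rdiv. ring.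
Qed.

Lemma aT_ge0 m n T j : 0 <= T -> 0 <= aT m n T j.
Proof.
  intros HT. unfold aT. apply Rmult_le_pos. apply Rmult_le_pos. apply Kc_pos.
  apply pow_le; lra. left; apply Rinv_0_lt_compat, INR_fact_lt_0.
Qed.

Lemma aT_mono m n x T j : 0 <= x <= T ->
  Kc m n * (4 * x) ^ (S j) / INR (Factorial.fact (S j)) <= aT m n T j.
Proof.
  intros Hx. unfold aT. unfold Rdiv. apply Rmult_le_compat_r.
  left; apply Rinv_0_lt_compat, INR_fact_lt_0.
  apply Rmult_le_compat_l. apply Kc_pos. apply pow_incr; lra.
Qed.

Fixpoint fs (a : nat -> R) (k : nat) : R :=
  match k with O => 0 | S k => fs a k + a k end.

Lemma Series_split a k : ex_series a -> Series a = fs a k + Series (fun j => a (k + j)%nat).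
Proof.
  intros Ha. induction k as [|k IH].
  - simpl. rewrite Rplus_0_l. apply Series_ext. intros; reflexivity.
  - rewrite IH. simpl.
    rewrite (Series_incr_1 (fun j => a (k + j)%nat)).
    2:{ apply (ex_series_incr_n a k). exact Ha. }
    rewrite Nat.add_0_r.
    rewrite (Series_ext (fun j => a (k + S j)%nat) (fun j => a (S (k + j))%nat)).
    ring. intros j. f_equal; lia.
Qed.

Lemma fs_tel (f : nat -> R) k : fs (fun j => f (S j) - f j) k = f k - f O.
Proof. induction k as [|k IH]; simpl. ring. rewrite IH. ring. Qed.

Lemma fs_sum a N : fs a (S N) = sum_f_R0 a N.
Proof. induction N as [|N IH]; simpl. ring. simpl in IH. rewrite IH. ring. Qed.

Lemma fs_lim a : ex_series a -> forall eps, 0 < eps ->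
  exists N, forall k, (N <= k)%nat -> Rabs (Series a - fs a k) < eps.
Proof.
  intros Ha eps He. assert (H := Series_correct a Ha).
  apply is_series_Reals in H. destruct (H eps He) as [N HN].
  exists (S N). intros k Hk. destruct k as [|k]; [lia|].
  rewrite fs_sum. specialize (HN k ltac:(lia)). unfold R_dist in HN.
  rewrite Rabs_minus_sym. exact HN.
Qed.

Definition tail m n T k := Series (fun j => aT m n T (k + j)%nat).

Lemma tail_eq m n T k : tail m n T k = Series (aT m n T) - fs (aT m n T) k.
Proof. unfold tail. rewrite (Series_split (aT m n T) k) by apply aT_ex. ring. Qed.

Lemma tail_small m n T eps : 0 < eps -> exists N, forall k, (N <= k)%nat -> tail m n T k < eps.
Proof.
  intros He. destruct (fs_lim (aT m n T) (aT_ex m n T) eps He) as [N HN].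
  exists N. intros k Hk. rewrite tail_eq. specialize (HN k Hk).
  assert (K := Rle_abs (Series (aT m n T) - fs (aT m n T) k)). lra.
Qed.

Definition dV m n x j := PV m n (S j) x - PV m n j x.
Definition dW m n x j := PW m n (S j) x - PW m n j x.

Lemma series_approx (d : nat -> R) (f : nat -> R) m n x T k :
  0 <= x <= T ->
  (forall j, d j = f (S j) - f j) ->
  (forall j, Rabs (d j) <= Kc m n * (4 * x) ^ (S j) / INR (Factorial.fact (S j))) ->
  Rabs (f O + Series d - f k) <= tail m n T k.
Proof.
  intros Hx Hd Hb.
  assert (Ex : ex_series d).
  { apply (ex_series_le (K:=R_AbsRing) (V:=R_CompleteNormedModule) d (aT m n x)).
    intros j. apply Hb. apply aT_ex. }
  rewrite (Series_split d k Ex).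
  assert (E : fs d k = f k - f O).
  { rewrite <- fs_tel. induction k as [|k IH]; simpl; auto. rewrite IH, Hd. reflexivity. }
  rewrite E. replace (f O + (f k - f O + Series (fun j => d (k + j)%nat)) - f k)
    with (Series (fun j => d (k + j)%nat)) by ring.
  assert (Ea : ex_series (fun j => aT m n T (k + j)%nat)).
  { apply (ex_series_incr_n (aT m n T) k). apply aT_ex. }
  assert (Hb' : forall j, Rabs (d (k + j)%nat) <= aT m n T (k + j)).
  { intros j. eapply Rle_trans; [apply Hb| apply aT_mono; auto]. }
  eapply Rle_trans. apply Series_Rabs.
  apply (ex_series_le (K:=R_AbsRing) (V:=R_CompleteNormedModule) _ (fun j => aT m n T (k + j)%nat)); auto.
  intros j. unfold norm; simpl. unfold abs; simpl. rewrite Rabs_Rabsolu. apply Hb'.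
  apply Series_le; auto. intros j. split; [apply Rabs_pos| apply Hb'].
Qed.

Definition Vl m n t := m + Series (dV m n (Rmax 0 t)).
Definition Wl m n t := n + Series (dW m n (Rmax 0 t)).

Lemma approx_pt m n x T k : 0 <= x <= T ->
  Rabs (Vl m n x - PV m n k x) <= tail m n T k /\ Rabs (Wl m n x - PW m n k x) <= tail m n T k.
Proof.
  intros Hx. unfold Vl, Wl. rewrite Rmax_right by lra.
  assert (B := fun j => pic_bound m n j x ltac:(lra)).
  split.
  - apply (series_approx (dV m n x) (fun j => PV m n j x) m n x T k); auto.
    intros j. specialize (B j). unfold dV. assert (0 <= Rabs (PW m n (S j) x - PW m n j x)) by apply Rabs_pos. lra.
  - apply (series_approx (dW m n x) (fun j => PW m n j x) m n x T k); auto.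
    intros j. specialize (B j). unfold dW. assert (0 <= Rabs (PV m n (S j) x - PV m n j x)) by apply Rabs_pos. lra.
Qed.

Lemma cont_Rmax0 : cont (fun s => Rmax 0 s).
Proof.
  intros t. apply cont_eps. intros eps He. exists eps. split; auto.
  intros s Hs. unfold Rmax. destruct (Rle_dec 0 s); destruct (Rle_dec 0 t);
  apply Rabs_def2 in Hs; apply Rabs_def1; lra.
Qed.

Lemma unif_cont (f : R -> R) (g : nat -> R -> R) t :
  (forall k, continuous (g k) t) ->
  (forall eps, 0 < eps -> exists k, forall s, Rabs (s - t) < 1 -> Rabs (f s - g k s) <= eps) ->
  continuous f t.
Proof.
  intros Hg Hu. apply cont_eps. intros eps He.
  destruct (Hu (eps / 3)) as [k Hk]; [lra|].
  destruct (proj1 (cont_eps (g k) t) (Hg k) (eps / 3)) as [d [Hd1 Hd2]]; [lra|].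
  exists (Rmin d 1). split. apply Rmin_pos; lra.
  intros s Hs.
  assert (Hs1 : Rabs (s - t) < d) by (eapply Rlt_le_trans; [exact Hs| apply Rmin_l]).
  assert (Hs2 : Rabs (s - t) < 1) by (eapply Rlt_le_trans; [exact Hs| apply Rmin_r]).
  assert (A := Hk s Hs2). assert (B := Hk t ltac:(rewrite Rminus_diag, Rabs_R0; lra)).
  assert (C := Hd2 s Hs1).
  replace (f s - f t) with ((f s - g k s) + (g k s - g k t) + - (f t - g k t)) by ring.
  eapply Rle_lt_trans. apply Rabs_triang. rewrite Rabs_Ropp.
  eapply Rle_lt_trans. apply Rplus_le_compat_r. apply Rabs_triang. lra.
Qed.

Lemma Vl_max m n s : Vl m n s = Vl m n (Rmax 0 s).
Proof. unfold Vl. rewrite (Rmax_right 0 (Rmax 0 s)); auto. apply Rmax_l. Qed.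
Lemma Wl_max m n s : Wl m n s = Wl m n (Rmax 0 s).
Proof. unfold Wl. rewrite (Rmax_right 0 (Rmax 0 s)); auto. apply Rmax_l. Qed.

Lemma Rmax0_bound s t : Rabs (s - t) < 1 -> 0 <= Rmax 0 s <= Rabs t + 1.
Proof.
  intros H. apply Rabs_def2 in H. split. apply Rmax_l.
  unfold Rmax. destruct (Rle_dec 0 s). assert (t <= Rabs t) by apply Rle_abs. lra.
  assert (0 <= Rabs t) by apply Rabs_pos. lra.
Qed.

Lemma Vl_cont m n : cont (Vl m n) /\ cont (Wl m n).
Proof.
  split; intros t.
  - apply (unif_cont _ (fun k s => PV m n k (Rmax 0 s))).
    + intros k. apply (continuous_comp (fun s => Rmax 0 s) (PV m n k)). apply cont_Rmax0.
      apply (pic_cont m n k).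
    + intros eps He. destruct (tail_small m n (Rabs t + 1) eps He) as [N HN].
      exists N. intros s Hs. rewrite Vl_max.
      destruct (approx_pt m n (Rmax 0 s) (Rabs t + 1) N (Rmax0_bound s t Hs)) as [A _].
      specialize (HN N (le_n N)). lra.
  - apply (unif_cont _ (fun k s => PW m n k (Rmax 0 s))).
    + intros k. apply (continuous_comp (fun s => Rmax 0 s) (PW m n k)). apply cont_Rmax0.
      apply (pic_cont m n k).
    + intros eps He. destruct (tail_small m n (Rabs t + 1) eps He) as [N HN].
      exists N. intros s Hs. rewrite Wl_max.
      destruct (approx_pt m n (Rmax 0 s) (Rabs t + 1) N (Rmax0_bound s t Hs)) as [_ A].
      specialize (HN N (le_n N)). lra.
Qed.

Lemma eq_eps a b c : 0 <= c -> (forall eps, 0 < eps -> Rabs (a - b) <= c * eps) -> a = b.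
Proof.
  intros Hc H. destruct (Req_dec a b) as [E|E]; auto.
  assert (P : 0 < Rabs (a - b)) by (apply Rabs_pos_lt; lra).
  specialize (H (Rabs (a - b) / (2 * (c + 1)))).
  assert (0 < Rabs (a - b) / (2 * (c + 1))) by (apply Rdiv_lt_0_compat; lra).
  specialize (H H0).
  assert (c * (Rabs (a - b) / (2 * (c + 1))) < Rabs (a - b)).
  { unfold Rdiv. rewrite <- Rmult_assoc. apply (Rmult_lt_reg_r (2 * (c + 1))). lra.
    rewrite Rmult_assoc, Rinv_l by lra. nra. }
  lra.
Qed.

Lemma Vl_int m n t : 0 <= t -> Vl m n t = m + RInt (Wl m n) 0 t.
Proof.
  intros Ht. destruct (Vl_cont m n) as [CV CW].
  apply (eq_eps _ _ (1 + t)); [lra|]. intros eps He.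
  destruct (tail_small m n t eps He) as [N HN].
  destruct (approx_pt m n t t (S N) ltac:(lra)) as [A _].
  assert (HN1 := HN (S N) ltac:(lia)). assert (HN0 := HN N ltac:(lia)).
  rewrite PV_S in A.
  assert (B : Rabs (RInt (fun s => PW m n N s - Wl m n s) 0 t) + Rabs (RInt (fun _ => 0) 0 t)
             <= RInt (fun _ => eps) 0 t).
  { apply RInt_bound2; auto. apply cont_minus; auto. apply (pic_cont m n N).
    apply cont_const. apply cont_const.
    intros s Hs. destruct (approx_pt m n s t N Hs) as [_ C].
    rewrite Rabs_R0. rewrite Rabs_minus_sym. lra. }
  rewrite RInt_sub in B; auto. 2: apply (pic_cont m n N).
  rewrite !RInt_cst in B. rewrite Rmult_0_r, Rabs_R0 in B.
  replace (Vl m n t - (m + RInt (Wl m n) 0 t)) with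
    ((Vl m n t - (m + RInt (PW m n N) 0 t)) + (RInt (PW m n N) 0 t - RInt (Wl m n) 0 t)) by ring.
  eapply Rle_trans. apply Rabs_triang. nra.
Qed.

Lemma Wl_int m n t : 0 <= t -> Wl m n t = n + RInt (fun s => Rfun (Vl m n s) - 3 * Wl m n s) 0 t.
Proof.
  intros Ht. destruct (Vl_cont m n) as [CV CW].
  apply (eq_eps _ _ (1 + 7 * t)); [lra|]. intros eps He.
  destruct (tail_small m n t eps He) as [N HN].
  destruct (approx_pt m n t t (S N) ltac:(lra)) as [_ A].
  assert (HN1 := HN (S N) ltac:(lia)). assert (HN0 := HN N ltac:(lia)).
  rewrite PW_S in A.
  destruct (pic_cont m n N) as [C1 C2].
  set (g1 := fun s => Rfun (PV m n N s) - 3 * PW m n N s).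
  set (g2 := fun s => Rfun (Vl m n s) - 3 * Wl m n s).
  assert (Cg1 : cont g1) by (apply cont_minus; [apply cont_Rfun; auto| apply cont_scal; auto]).
  assert (Cg2 : cont g2) by (apply cont_minus; [apply cont_Rfun; auto| apply cont_scal; auto]).
  assert (B : Rabs (RInt (fun s => g1 s - g2 s) 0 t) + Rabs (RInt (fun _ => 0) 0 t)
             <= RInt (fun _ => 7 * eps) 0 t).
  { apply RInt_bound2; auto. apply cont_minus; auto.
    apply cont_const. apply cont_const.
    intros s Hs. destruct (approx_pt m n s t N Hs) as [C D].
    rewrite Rabs_R0. unfold g1, g2.
    assert (L := Rfun_lip (PV m n N s) (Vl m n s)).
    replace (Rfun (PV m n N s) - 3 * PW m n N s - (Rfun (Vl m n s) - 3 * Wl m n s))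
      with ((Rfun (PV m n N s) - Rfun (Vl m n s)) + (-3) * (PW m n N s - Wl m n s)) by ring.
    assert (T := Rabs_triang (Rfun (PV m n N s) - Rfun (Vl m n s)) ((-3) * (PW m n N s - Wl m n s))).
    rewrite Rabs_mult in T. rewrite (Rabs_left (-3)) in T by lra.
    rewrite (Rabs_minus_sym (PW m n N s)) in T. rewrite (Rabs_minus_sym (PV m n N s)) in L. lra. }
  rewrite RInt_sub in B; auto.
  rewrite !RInt_cst in B. rewrite Rmult_0_r, Rabs_R0 in B.
  replace (Wl m n t - (n + RInt g2 0 t)) with
    ((Wl m n t - (n + RInt g1 0 t)) + (RInt g1 0 t - RInt g2 0 t)) by ring.
  eapply Rle_trans. apply Rabs_triang. unfold g1 at 1. nra.
Qed.

Definition solV m n t := m + RInt (Wl m n) 0 t.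
Definition solW m n t := n + RInt (fun s => Rfun (Vl m n s) - 3 * Wl m n s) 0 t.

Lemma deriv_c_RInt g c : cont g -> forall t, is_derive (fun t => c + RInt g 0 t) t (g t).
Proof.
  intros H t.
  apply (is_derive_ext (K:=R_AbsRing) (V:=R_NormedModule) (fun t => plus c (RInt g 0 t))).
  { intros; reflexivity. }
  replace (g t) with (plus 0 (g t)) by (unfold plus; simpl; ring).
  apply (is_derive_plus (K:=R_AbsRing) (V:=R_NormedModule) (fun _ => c) (fun t => RInt g 0 t)).
  apply (is_derive_const (K:=R_AbsRing) (V:=R_NormedModule) c t). apply RInt0_deriv; auto.
Qed.

Lemma sol_exists m n : is_sol m n (solV m n) (solW m n).
Proof.
  destruct (Vl_cont m n) as [CV CW].
  assert (CG : cont (fun s => Rfun (Vl m n s) - 3 * Wl m n s))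
    by (apply cont_minus; [apply cont_Rfun; auto| apply cont_scal; auto]).
  assert (EV : forall t, 0 <= t -> solV m n t = Vl m n t) by (intros; rewrite Vl_int; auto).
  assert (EW : forall t, 0 <= t -> solW m n t = Wl m n t) by (intros; rewrite Wl_int; auto).
  unfold is_sol. split; [|split; [|split]].
  - unfold solV. rewrite RInt_point. unfold zero; simpl. ring.
  - unfold solW. rewrite RInt_point. unfold zero; simpl. ring.
  - intros t Ht. rewrite EW by auto. apply (deriv_c_RInt (Wl m n) m CW).
  - intros t Ht. rewrite EV, EW by auto.
    apply (deriv_c_RInt _ n CG).
Qed.

Lemma is_derive_val (f : R -> R) x l l' : is_derive f x l -> l = l' -> is_derive f x l'.
Proof. intros H E; subst; exact H. Qed.

Lemma deriv_expw c W s w : is_derive W s w ->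
  is_derive (fun s => exp (c * s) * W s) s (exp (c * s) * (c * W s + w)).
Proof.
  intros H.
  assert (HE : is_derive (fun s => exp (c * s)) s (c * exp (c * s))) by (auto_derive; auto; ring).
  assert (H2 := is_derive_mult (K:=R_AbsRing) (fun s => exp (c * s)) W s _ _ HE H
     ltac:(intros; unfold mult; simpl; ring)).
  eapply is_derive_val. exact H2. unfold plus, mult; simpl. ring.
Qed.

Lemma deriv_cont (f : R -> R) (t l : R) : is_derive f t l -> continuous f t.
Proof. intros H. apply (ex_derive_continuous (K:=R_AbsRing) (V:=R_NormedModule)). exists l; exact H. Qed.

Lemma nbhd_lt f t c : continuous f t -> f t < c ->
  exists e, 0 < e /\ forall s, Rabs (s - t) < e -> f s < c.
Proof.
  intros H Hc. destruct (proj1 (cont_eps f t) H (c - f t)) as [d [Hd1 Hd2]]; [lra|].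
  exists d. split; auto. intros s Hs. specialize (Hd2 s Hs). apply Rabs_def2 in Hd2. lra.
Qed.

Lemma nbhd_gt f t c : continuous f t -> c < f t ->
  exists e, 0 < e /\ forall s, Rabs (s - t) < e -> c < f s.
Proof.
  intros H Hc. destruct (proj1 (cont_eps f t) H (f t - c)) as [d [Hd1 Hd2]]; [lra|].
  exists d. split; auto. intros s Hs. specialize (Hd2 s Hs). apply Rabs_def2 in Hd2. lra.
Qed.

Lemma closure_le f a t c : continuous f t -> a < t -> (forall s, a <= s < t -> f s < c) -> f t <= c.
Proof.
  intros H Ha Hs. destruct (Rle_or_lt (f t) c) as [h|h]; auto.
  destruct (nbhd_gt f t c H h) as [e [He1 He2]].
  set (s := Rmax a (t - e / 2)).
  assert (a <= s) by apply Rmax_l. assert (t - e/2 <= s) by apply Rmax_r.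
  assert (s < t) by (unfold s; unfold Rmax; destruct Rle_dec; lra).
  assert (f s < c) by (apply Hs; lra).
  assert (c < f s) by (apply He2; apply Rabs_def1; lra). lra.
Qed.

Lemma closure_ge f a t c : continuous f t -> a < t -> (forall s, a <= s < t -> c < f s) -> c <= f t.
Proof.
  intros H Ha Hs. destruct (Rle_or_lt c (f t)) as [h|h]; auto.
  destruct (nbhd_lt f t c H h) as [e [He1 He2]].
  set (s := Rmax a (t - e / 2)).
  assert (a <= s) by apply Rmax_l. assert (t - e/2 <= s) by apply Rmax_r.
  assert (s < t) by (unfold s; unfold Rmax; destruct Rle_dec; lra).
  assert (c < f s) by (apply Hs; lra).
  assert (f s < c) by (apply He2; apply Rabs_def1; lra). lra.
Qed.

Lemma deriv_right_lt f t l : is_derive f t l -> l < 0 ->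
  exists e, 0 < e /\ forall h, 0 < h < e -> f (t + h) < f t.
Proof.
  intros H Hl. apply is_derive_Reals in H.
  destruct (H (- l / 2)) as [d Hd]; [lra|].
  exists d. split; [apply cond_pos|]. intros h Hh.
  assert (K := Hd h ltac:(lra) ltac:(rewrite Rabs_right; lra)).
  apply Rabs_def2 in K.
  assert ((f (t + h) - f t) / h < 0) by lra.
  assert ((f (t + h) - f t) / h * h < 0) by nra.
  unfold Rdiv in H1. rewrite Rmult_assoc, Rinv_l in H1 by lra. lra.
Qed.

Lemma deriv_right_gt f t l : is_derive f t l -> 0 < l ->
  exists e, 0 < e /\ forall h, 0 < h < e -> f t < f (t + h).
Proof.
  intros H Hl. apply is_derive_Reals in H.
  destruct (H (l / 2)) as [d Hd]; [lra|].
  exists d. split; [apply cond_pos|]. intros h Hh.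
  assert (K := Hd h ltac:(lra) ltac:(rewrite Rabs_right; lra)).
  apply Rabs_def2 in K.
  assert (0 < (f (t + h) - f t) / h) by lra.
  assert (0 < (f (t + h) - f t) / h * h) by nra.
  unfold Rdiv in H1. rewrite Rmult_assoc, Rinv_l in H1 by lra. lra.
Qed.

Lemma cont_ind (P : R -> Prop) a :
  (exists e, 0 < e /\ forall s, a <= s < a + e -> P s) ->
  (forall t1, a < t1 -> (forall s, a <= s < t1 -> P s) ->
     exists e, 0 < e /\ forall s, t1 <= s < t1 + e -> P s) ->
  forall t, a <= t -> P t.
Proof.
  intros [e [He Hstart]] Hstep T HT.
  destruct (classic (P T)) as [HP|HP]; auto. exfalso.
  assert (HT2 : a + e <= T).
  { destruct (Rle_or_lt (a + e) T) as [h|h]; auto. exfalso; apply HP, Hstart; lra. }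
  set (E := fun x => a <= x <= T /\ forall s, a <= s < x -> P s).
  assert (Eb : bound E) by (exists T; intros x [Hx _]; lra).
  assert (Ene : exists x, E x) by (exists a; split; [lra| intros; lra]).
  destruct (completeness E Eb Ene) as [t1 [Hub Hlub]].
  assert (Hae : E (a + e)) by (split; [lra| intros s Hs; apply Hstart; lra]).
  assert (Ht1a : a + e <= t1) by (apply Hub; auto).
  assert (Ht1T : t1 <= T) by (apply Hlub; intros x [Hx _]; lra).
  assert (Hbelow : forall s, a <= s < t1 -> P s).
  { intros s Hs. destruct (classic (exists x, E x /\ s < x)) as [[x [[_ Hx] Hsx]]|Hn].
    - apply Hx; lra.
    - exfalso. assert (t1 <= s); [|lra]. apply Hlub. intros x Ex.
      destruct (Rle_or_lt x s) as [h|h]; auto. exfalso; apply Hn; exists x; auto. }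
  destruct (Hstep t1 ltac:(lra) Hbelow) as [e2 [He2 H2]].
  destruct (Rle_or_lt (t1 + e2 / 2) T) as [h|h].
  - assert (E (t1 + e2 / 2)).
    { split; [lra|]. intros s Hs. destruct (Rlt_or_le s t1). apply Hbelow; lra. apply H2; lra. }
    assert (t1 + e2 / 2 <= t1) by (apply Hub; auto). lra.
  - apply HP. apply H2. lra.
Qed.

Lemma connected (A B : R -> Prop) a b : a < b -> A a -> B b ->
  (forall x, A x -> exists e, 0 < e /\ forall y, Rabs (y - x) < e -> A y) ->
  (forall x, B x -> exists e, 0 < e /\ forall y, Rabs (y - x) < e -> B y) ->
  (forall x, A x -> B x -> False) ->
  exists x, ~ A x /\ ~ B x.
Proof.
  intros Hab Ha Hb OA OB D.
  set (E := fun x => a <= x <= b /\ A x).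
  assert (Eb : bound E) by (exists b; intros x [Hx _]; lra).
  assert (Ene : exists x, E x) by (exists a; split; [lra| auto]).
  destruct (completeness E Eb Ene) as [s [Hub Hlub]].
  assert (Has : a <= s) by (apply Hub; split; [lra|auto]).
  assert (Hsb : s <= b) by (apply Hlub; intros x [Hx _]; lra).
  exists s. split.
  - intros As. destruct (OA s As) as [e [He HA]].
    assert (s < b). { destruct Hsb as [h|h]; auto. subst. exfalso; apply (D b); auto. }
    set (x := Rmin (s + e / 2) b).
    assert (x <= s + e/2) by apply Rmin_l. assert (x <= b) by apply Rmin_r.
    assert (s < x) by (unfold x; unfold Rmin; destruct Rle_dec; lra).
    assert (E x). { split; [lra|]. apply HA. apply Rabs_def1; lra. }
    assert (x <= s) by (apply Hub; auto). lra.
  - intros Bs. destruct (OB s Bs) as [e [He HB]].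
    destruct (classic (exists x, E x /\ s - e < x)) as [[x [[Hx1 Hx2] Hx3]]|Hn].
    + assert (x <= s) by (apply Hub; split; auto).
      apply (D x); auto. apply HB. apply Rabs_def1; lra.
    + assert (s <= s - e); [|lra]. apply Hlub. intros x Ex.
      destruct (Rle_or_lt x (s - e)) as [h|h]; auto. exfalso; apply Hn; exists x; auto.
Qed.

Lemma dplus (f g : R -> R) s a b : is_derive f s a -> is_derive g s b ->
  is_derive (fun s => f s + g s) s (a + b).
Proof. intros H1 H2. apply (is_derive_plus (K:=R_AbsRing) (V:=R_NormedModule) f g s a b H1 H2). Qed.

Lemma dmult (f g : R -> R) s a b : is_derive f s a -> is_derive g s b ->
  is_derive (fun s => f s * g s) s (a * g s + f s * b).
Proof.
  intros H1 H2.
  assert (H := is_derive_mult (K:=R_AbsRing) f g s _ _ H1 H2 ltac:(intros; unfold mult; simpl; ring)).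
  eapply is_derive_val. exact H. reflexivity.
Qed.

Lemma dminus (f g : R -> R) s a b : is_derive f s a -> is_derive g s b ->
  is_derive (fun s => f s - g s) s (a - b).
Proof. intros H1 H2. apply (is_derive_minus (K:=R_AbsRing) (V:=R_NormedModule) f g s a b H1 H2). Qed.

Lemma dconst c s : is_derive (fun _ : R => c) s 0.
Proof. apply (is_derive_const (K:=R_AbsRing) (V:=R_NormedModule) c s). Qed.

Lemma nbhd_and (P Q : R -> Prop) t :
  (exists e, 0 < e /\ forall s, Rabs (s - t) < e -> P s) ->
  (exists e, 0 < e /\ forall s, Rabs (s - t) < e -> Q s) ->
  exists e, 0 < e /\ forall s, Rabs (s - t) < e -> P s /\ Q s.
Proof.
  intros [e1 [H1 P1]] [e2 [H2 P2]]. exists (Rmin e1 e2). split. apply Rmin_pos; auto.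
  intros s Hs. split. apply P1. eapply Rlt_le_trans; [exact Hs| apply Rmin_l].
  apply P2. eapply Rlt_le_trans; [exact Hs| apply Rmin_r].
Qed.

Lemma nbhd_right (P : R -> Prop) t :
  (exists e, 0 < e /\ forall s, Rabs (s - t) < e -> P s) ->
  exists e, 0 < e /\ forall s, t <= s < t + e -> P s.
Proof.
  intros [e [He H]]. exists e. split; auto. intros s Hs. apply H. apply Rabs_def1; lra.
Qed.




Lemma solV_cont m n V W t : is_sol m n V W -> 0 <= t -> continuous V t.
Proof. intros [_ [_ [H _]]] Ht. eapply deriv_cont. apply H; auto. Qed.
Lemma solW_cont m n V W t : is_sol m n V W -> 0 <= t -> continuous W t.
Proof. intros [_ [_ [_ H]]] Ht. eapply deriv_cont. apply H; auto. Qed.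

Lemma Rfun_small V : Rabs (Rfun V) <= 4 * Rabs (V + 1).
Proof. assert (H := Rfun_lip V (-1)). rewrite Rfun_m1 in H. replace (V - -1) with (V + 1) in H by ring.
  rewrite Rminus_0_r in H. exact H. Qed.

Lemma u_deriv m n V W s : is_sol m n V W -> 0 <= s ->
  is_derive (fun s => (V s + 1) * (V s + 1) + W s * W s) s
    (2 * (V s + 1) * W s + 2 * W s * (Rfun (V s) - 3 * W s)).
Proof.
  intros [_ [_ [HV HW]]] Hs.
  assert (A : is_derive (fun s => V s + 1) s (W s + 0)) by (apply dplus; [apply HV; auto| apply dconst]).
  eapply is_derive_val.
  apply dplus. apply (dmult _ _ s _ _ A A). apply (dmult _ _ s _ _ (HW s Hs) (HW s Hs)).
  rreq; ring.
Qed.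

Lemma back_uniq m n V W t1 : is_sol m n V W -> 0 <= t1 -> V t1 = -1 -> W t1 = 0 -> m = -1.
Proof.
  intros Hs Ht1 HV HW.
  set (u := fun s => (V s + 1) * (V s + 1) + W s * W s).
  assert (K := incr_deriv (fun s => exp (11 * s) * u s)
    (fun s => exp (11 * s) * (11 * u s + (2 * (V s + 1) * W s + 2 * W s * (Rfun (V s) - 3 * W s))))
    0 t1 Ht1).
  assert (L : exp (11 * 0) * u 0 <= exp (11 * t1) * u t1).
  { apply K.
    - intros x Hx. apply deriv_expw. apply (u_deriv m n V W x Hs). lra.
    - intros x Hx. apply Rmult_le_pos. left; apply exp_pos. unfold u.
      assert (R1 := Rfun_small (V x)).
      assert (R2 : Rfun (V x) * Rfun (V x) <= 16 * ((V x + 1) * (V x + 1))).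
      { assert (0 <= Rabs (Rfun (V x))) by apply Rabs_pos.
        assert (Rabs (Rfun (V x)) * Rabs (Rfun (V x)) <= 4 * Rabs (V x + 1) * (4 * Rabs (V x + 1))) by nra.
        assert (E1 : Rabs (Rfun (V x)) * Rabs (Rfun (V x)) = Rfun (V x) * Rfun (V x))
          by (rewrite <- Rabs_mult; apply Rabs_right; apply Rle_ge; apply Rle_0_sqr).
        assert (E2 : Rabs (V x + 1) * Rabs (V x + 1) = (V x + 1) * (V x + 1))
          by (rewrite <- Rabs_mult; apply Rabs_right; apply Rle_ge; apply Rle_0_sqr).
        nra. }
      assert (0 <= (2 * W x + Rfun (V x) / 2) * (2 * W x + Rfun (V x) / 2)) by apply Rle_0_sqr.
      assert (0 <= (V x + 1 + W x) * (V x + 1 + W x)) by apply Rle_0_sqr.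
      assert (0 <= (V x + 1) * (V x + 1)) by apply Rle_0_sqr.
      nra. }
  unfold u in L. rewrite HV, HW in L. destruct Hs as [H0 [H1 _]]. rewrite H0, H1 in L.
  replace (11 * 0) with 0 in L by ring. rewrite exp_0 in L.
  assert ((m + 1) * (m + 1) <= 0) by nra. nra.
Qed.

Lemma cont_dep m n1 n2 V1 W1 V2 W2 t : is_sol m n1 V1 W1 -> is_sol m n2 V2 W2 -> 0 <= t ->
  (V1 t - V2 t) * (V1 t - V2 t) + (W1 t - W2 t) * (W1 t - W2 t) <= exp (11 * t) * ((n1 - n2) * (n1 - n2)).
Proof.
  intros S1 S2 Ht.
  set (u := fun s => (V1 s - V2 s) * (V1 s - V2 s) + (W1 s - W2 s) * (W1 s - W2 s)).
  set (du := fun s => 2 * (V1 s - V2 s) * (W1 s - W2 s) + 2 * (W1 s - W2 s) *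
      ((Rfun (V1 s) - 3 * W1 s) - (Rfun (V2 s) - 3 * W2 s))).
  assert (K := incr_deriv (fun s => (-1) * (exp ((-11) * s) * u s))
    (fun s => (-1) * (exp ((-11) * s) * ((-11) * u s + du s))) 0 t Ht).
  assert (L : (-1) * (exp ((-11) * 0) * u 0) <= (-1) * (exp ((-11) * t) * u t)).
  { apply K.
    - intros x Hx. destruct S1 as [_ [_ [HV1 HW1]]]. destruct S2 as [_ [_ [HV2 HW2]]].
      assert (D : is_derive u x (du x)).
      { assert (A : is_derive (fun s => V1 s - V2 s) x (W1 x - W2 x)).
        { apply dminus. apply HV1; lra. apply HV2; lra. }
        assert (B : is_derive (fun s => W1 s - W2 s) x
                    ((Rfun (V1 x) - 3 * W1 x) - (Rfun (V2 x) - 3 * W2 x))).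
        { apply dminus. apply HW1; lra. apply HW2; lra. }
        eapply is_derive_val. apply dplus. apply (dmult _ _ x _ _ A A). apply (dmult _ _ x _ _ B B).
        unfold du. rreq; ring. }
      apply (is_derive_scal _ x (-1)). apply deriv_expw. exact D.
    - intros x Hx. unfold du, u.
      assert (R1 := Rfun_lip (V1 x) (V2 x)).
      assert (R2 : (Rfun (V1 x) - Rfun (V2 x)) * (Rfun (V1 x) - Rfun (V2 x)) <= 16 * ((V1 x - V2 x) * (V1 x - V2 x))).
      { assert (0 <= Rabs (Rfun (V1 x) - Rfun (V2 x))) by apply Rabs_pos.
        assert (Rabs (Rfun (V1 x) - Rfun (V2 x)) * Rabs (Rfun (V1 x) - Rfun (V2 x)) <=
                4 * Rabs (V1 x - V2 x) * (4 * Rabs (V1 x - V2 x))) by nra.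
        assert (E1 : Rabs (Rfun (V1 x) - Rfun (V2 x)) * Rabs (Rfun (V1 x) - Rfun (V2 x)) = (Rfun (V1 x) - Rfun (V2 x)) * (Rfun (V1 x) - Rfun (V2 x)))
          by (rewrite <- Rabs_mult; apply Rabs_right; apply Rle_ge; apply Rle_0_sqr).
        assert (E2 : Rabs (V1 x - V2 x) * Rabs (V1 x - V2 x) = (V1 x - V2 x) * (V1 x - V2 x))
          by (rewrite <- Rabs_mult; apply Rabs_right; apply Rle_ge; apply Rle_0_sqr).
        nra. }
      assert (0 < exp ((-11) * x)) by apply exp_pos.
      assert (0 <= (V1 x - V2 x - (W1 x - W2 x)) * (V1 x - V2 x - (W1 x - W2 x))) by apply Rle_0_sqr.
      assert (0 <= (2 * (W1 x - W2 x) - (Rfun (V1 x) - Rfun (V2 x)) / 2) * (2 * (W1 x - W2 x) - (Rfun (V1 x) - Rfun (V2 x)) / 2)) by apply Rle_0_sqr.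
      assert (0 <= (V1 x - V2 x) * (V1 x - V2 x)) by apply Rle_0_sqr.
      assert (0 <= (W1 x - W2 x) * (W1 x - W2 x)) by apply Rle_0_sqr.
      assert (0 <= (-11) * ((V1 x - V2 x) * (V1 x - V2 x) + (W1 x - W2 x) * (W1 x - W2 x)) * (-1) -
        (2 * (V1 x - V2 x) * (W1 x - W2 x) + 2 * (W1 x - W2 x) *
         (Rfun (V1 x) - 3 * W1 x - (Rfun (V2 x) - 3 * W2 x)))) by nra.
      nra. }
  unfold u in L. destruct S1 as [A1 [B1 _]]. destruct S2 as [A2 [B2 _]].
  rewrite A1, A2, B1, B2 in L. replace ((-11) * 0) with 0 in L by ring. rewrite exp_0 in L.
  assert (E : exp (11 * t) * exp ((-11) * t) = 1) by (rewrite <- exp_plus; replace (11 * t + -11 * t) with 0 by ring; apply exp_0).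
  assert (0 < exp (11 * t)) by apply exp_pos.
  assert (0 <= (V1 t - V2 t) * (V1 t - V2 t)) by apply Rle_0_sqr.
  assert (0 <= (W1 t - W2 t) * (W1 t - W2 t)) by apply Rle_0_sqr.
  set (U := (V1 t - V2 t) * (V1 t - V2 t) + (W1 t - W2 t) * (W1 t - W2 t)) in *.
  set (e1 := exp (11 * t)) in *. set (e2 := exp ((-11) * t)) in *.
  assert (e2 * U <= (n1 - n2) * (n1 - n2)) by lra.
  assert (HU : U = e1 * (e2 * U)) by (rewrite <- Rmult_assoc, E; ring).
  rewrite HU. apply Rmult_le_compat_l; lra.
Qed.

Lemma psi_deriv m n V W s : is_sol m n V W -> 0 <= s ->
  is_derive (fun s => exp (3 * s) * W s) s (exp (3 * s) * Rfun (V s)).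
Proof.
  intros [_ [_ [_ HW]]] Hs. eapply is_derive_val. apply deriv_expw. apply HW; auto. rreq; ring.
Qed.

Lemma psi_le m n V W a b : is_sol m n V W -> 0 <= a -> a <= b ->
  (forall x, a <= x <= b -> Rfun (V x) <= 0) -> exp (3 * b) * W b <= exp (3 * a) * W a.
Proof.
  intros S Ha Hab H.
  assert (K := incr_deriv (fun s => (-1) * (exp (3 * s) * W s)) (fun s => (-1) * (exp (3 * s) * Rfun (V s))) a b Hab).
  assert ((-1) * (exp (3 * a) * W a) <= (-1) * (exp (3 * b) * W b)); [|lra].
  apply K.
  - intros x Hx. apply (is_derive_scal _ x (-1)). apply (psi_deriv m n V W x S). lra.
  - intros x Hx. specialize (H x Hx). assert (0 < exp (3 * x)) by apply exp_pos. nra.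
Qed.

Lemma psi_ge m n V W a b : is_sol m n V W -> 0 <= a -> a <= b ->
  (forall x, a <= x <= b -> 0 <= Rfun (V x)) -> exp (3 * a) * W a <= exp (3 * b) * W b.
Proof.
  intros S Ha Hab H.
  apply (incr_deriv (fun s => exp (3 * s) * W s) (fun s => exp (3 * s) * Rfun (V s)) a b Hab).
  - intros x Hx. apply (psi_deriv m n V W x S). lra.
  - intros x Hx. specialize (H x Hx). assert (0 < exp (3 * x)) by apply exp_pos. nra.
Qed.

Lemma V_ge m n V W a b : is_sol m n V W -> 0 <= a -> a <= b ->
  (forall x, a <= x <= b -> 0 <= W x) -> V a <= V b.
Proof.
  intros [_ [_ [HV _]]] Ha Hab H. apply (incr_deriv V W a b Hab); auto.
  intros x Hx. apply HV. lra.
Qed.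

Lemma V_le m n V W a b : is_sol m n V W -> 0 <= a -> a <= b ->
  (forall x, a <= x <= b -> W x <= 0) -> V b <= V a.
Proof.
  intros [_ [_ [HV _]]] Ha Hab H.
  assert ((-1) * V a <= (-1) * V b); [|lra].
  apply (incr_deriv (fun s => (-1) * V s) (fun s => (-1) * W s) a b Hab).
  intros x Hx. apply (is_derive_scal V x (-1)). apply HV. lra.
  intros x Hx. specialize (H x Hx). lra.
Qed.

Lemma exp_pos_mult_neg e w : 0 < e -> e * w < 0 -> w < 0.
Proof. intros. destruct (Rlt_or_le w 0); auto. nra. Qed.
Lemma exp_pos_mult_pos e w : 0 < e -> 0 < e * w -> 0 < w.
Proof. intros. destruct (Rlt_or_le 0 w); auto. nra. Qed.

Lemma invA m n V W a : is_sol m n V W -> 0 <= a -> W a < 0 -> V a < -1 ->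
  forall t, a <= t -> W t < 0 /\ V t < -1.
Proof.
  intros S Ha HWa HVa. apply cont_ind.
  - apply nbhd_right. apply nbhd_and.
    apply nbhd_lt; auto. apply (solW_cont m n V W); auto.
    apply nbhd_lt; auto. apply (solV_cont m n V W); auto.
  - intros t1 Ht1 Hb.
    assert (CW : W t1 <= 0).
    { apply (closure_le W a t1 0); auto. apply (solW_cont m n V W); auto; lra.
      intros s Hs; apply Hb; auto. }
    assert (CV : V t1 <= -1).
    { apply (closure_le V a t1 (-1)); auto. apply (solV_cont m n V W); auto; lra.
      intros s Hs; apply Hb; auto. }
    assert (Hall : forall x, a <= x <= t1 -> W x <= 0 /\ V x <= -1).
    { intros x Hx. destruct (Rlt_or_le x t1) as [h|h].
      destruct (Hb x ltac:(lra)); split; lra. replace x with t1 by lra. auto. }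
    assert (P1 := psi_le m n V W a t1 S Ha ltac:(lra)).
    assert (P1' : exp (3 * t1) * W t1 <= exp (3 * a) * W a).
    { apply P1. intros x Hx. rewrite <- Rfun_m1. apply Rfun_mono. apply Hall; auto. }
    assert (0 < exp (3 * a)) by apply exp_pos.
    assert (W1 : W t1 < 0).
    { apply (exp_pos_mult_neg (exp (3 * t1))). apply exp_pos. nra. }
    assert (V1 : V t1 < -1).
    { assert (V t1 <= V a); [|lra]. apply (V_le m n V W a t1 S Ha ltac:(lra)).
      intros x Hx; apply Hall; auto. }
    apply nbhd_right. apply nbhd_and.
    apply nbhd_lt; auto. apply (solW_cont m n V W); auto; lra.
    apply nbhd_lt; auto. apply (solV_cont m n V W); auto; lra.
Qed.

Lemma invB m n V W a : is_sol m n V W -> 0 <= a -> 0 < W a -> -1 < V a ->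
  forall t, a <= t -> 0 < W t /\ -1 < V t.
Proof.
  intros S Ha HWa HVa. apply cont_ind.
  - apply nbhd_right. apply nbhd_and.
    apply nbhd_gt; auto. apply (solW_cont m n V W); auto.
    apply nbhd_gt; auto. apply (solV_cont m n V W); auto.
  - intros t1 Ht1 Hb.
    assert (CW : 0 <= W t1).
    { apply (closure_ge W a t1 0); auto. apply (solW_cont m n V W); auto; lra.
      intros s Hs; apply Hb; auto. }
    assert (CV : -1 <= V t1).
    { apply (closure_ge V a t1 (-1)); auto. apply (solV_cont m n V W); auto; lra.
      intros s Hs; apply Hb; auto. }
    assert (Hall : forall x, a <= x <= t1 -> 0 <= W x /\ -1 <= V x).
    { intros x Hx. destruct (Rlt_or_le x t1) as [h|h].
      destruct (Hb x ltac:(lra)); split; lra. replace x with t1 by lra. auto. }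
    assert (P1 := psi_ge m n V W a t1 S Ha ltac:(lra)).
    assert (P1' : exp (3 * a) * W a <= exp (3 * t1) * W t1).
    { apply P1. intros x Hx. rewrite <- Rfun_m1. apply Rfun_mono. apply Hall; auto. }
    assert (0 < exp (3 * a)) by apply exp_pos.
    assert (W1 : 0 < W t1).
    { apply (exp_pos_mult_pos (exp (3 * t1))). apply exp_pos. nra. }
    assert (V1 : -1 < V t1).
    { assert (V a <= V t1); [|lra]. apply (V_ge m n V W a t1 S Ha ltac:(lra)).
      intros x Hx; apply Hall; auto. }
    apply nbhd_right. apply nbhd_and.
    apply nbhd_gt; auto. apply (solW_cont m n V W); auto; lra.
    apply nbhd_gt; auto. apply (solV_cont m n V W); auto; lra.
Qed.

Lemma cont_minus_at (f g : R -> R) t : continuous f t -> continuous g t -> continuous (fun s => f s - g s) t.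
Proof. intros. apply (continuous_minus (V:=R_NormedModule) f g); auto. Qed.

Lemma exp3_bounds : 4 <= exp 3 <= 27.
Proof.
  split. assert (H := exp_ineq1_le 3). lra.
  replace 3 with (1 + 1 + 1) at 1 by ring. rewrite !exp_plus.
  assert (H := exp_le_3). assert (0 < exp 1) by apply exp_pos. nra.
Qed.

Lemma exp_inv s : exp (3 * s) * exp ((-3) * s) = 1.
Proof. rewrite <- exp_plus. replace (3 * s + -3 * s) with 0 by ring. apply exp_0. Qed.

Lemma comparison m n1 n2 V1 W1 V2 W2 : is_sol m n1 V1 W1 -> is_sol m n2 V2 W2 -> n1 < n2 ->
  forall t, 0 <= t -> (n2 - n1) * (1 - exp ((-3) * t)) / 3 <= V2 t - V1 t.
Proof.
  intros S1 S2 Hn.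
  assert (S1c := S1). assert (S2c := S2). destruct S1 as [A1 [B1 [HV1 HW1]]]. destruct S2 as [A2 [B2 [HV2 HW2]]].
  assert (DE : forall s, 0 <= s -> is_derive (fun s => exp (3 * s) * (W2 s - W1 s)) s
                  (exp (3 * s) * (Rfun (V2 s) - Rfun (V1 s)))).
  { intros s Hs. eapply is_derive_val. apply deriv_expw. apply dminus. apply HW2; auto. apply HW1; auto.
    rreq; ring. }
  assert (CE : forall t, 0 <= t -> continuous (fun s => W2 s - W1 s) t).
  { intros t Ht. apply cont_minus_at. apply (solW_cont m n2 V2 W2); auto. apply (solW_cont m n1 V1 W1); auto. }
  assert (DD : forall x, 0 <= x -> is_derive (fun s => V2 s - V1 s) x (W2 x - W1 x)).
  { intros x Hx. apply dminus; auto. }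
  assert (Epos : forall t, 0 <= t -> 0 < W2 t - W1 t).
  { apply cont_ind.
    - apply nbhd_right. apply (nbhd_gt (fun s => W2 s - W1 s) 0 0). apply CE; lra.
      rewrite B1, B2. lra.
    - intros t1 Ht1 Hb.
      assert (C0 : 0 <= W2 t1 - W1 t1).
      { apply (closure_ge (fun s => W2 s - W1 s) 0 t1 0); auto. apply CE; lra. }
      assert (HEall : forall x, 0 <= x <= t1 -> 0 <= W2 x - W1 x).
      { intros x Hx. destruct (Rlt_or_le x t1) as [h|h].
        left; apply Hb; lra. replace x with t1 by lra. auto. }
      assert (HD : forall x, 0 <= x <= t1 -> V1 x <= V2 x).
      { intros x Hx. assert (K := incr_deriv (fun s => V2 s - V1 s) (fun s => W2 s - W1 s) 0 x
          ltac:(lra) ltac:(intros y Hy; apply DD; lra) ltac:(intros y Hy; apply HEall; lra)).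
        simpl in K. rewrite A1, A2 in K. lra. }
      assert (K := incr_deriv (fun s => exp (3 * s) * (W2 s - W1 s))
                   (fun s => exp (3 * s) * (Rfun (V2 s) - Rfun (V1 s))) 0 t1 ltac:(lra)
                   ltac:(intros y Hy; apply DE; lra)).
      assert (K2 : exp (3 * 0) * (W2 0 - W1 0) <= exp (3 * t1) * (W2 t1 - W1 t1)).
      { apply K. intros y Hy. assert (0 < exp (3 * y)) by apply exp_pos.
        assert (Rfun (V1 y) <= Rfun (V2 y)) by (apply Rfun_mono; apply HD; auto). nra. }
      rewrite B1, B2 in K2. replace (3 * 0) with 0 in K2 by ring. rewrite exp_0 in K2.
      assert (0 < W2 t1 - W1 t1).
      { apply (exp_pos_mult_pos (exp (3 * t1))). apply exp_pos. lra. }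
      apply nbhd_right. apply (nbhd_gt (fun s => W2 s - W1 s) t1 0). apply CE; lra. auto. }
  assert (HD : forall x, 0 <= x -> V1 x <= V2 x).
  { intros x Hx. assert (K := incr_deriv (fun s => V2 s - V1 s) (fun s => W2 s - W1 s) 0 x
      Hx ltac:(intros y Hy; apply DD; lra) ltac:(intros y Hy; left; apply Epos; lra)).
    simpl in K. rewrite A1, A2 in K. lra. }
  assert (Hpsi : forall x, 0 <= x -> n2 - n1 <= exp (3 * x) * (W2 x - W1 x)).
  { intros x Hx.
    assert (K := incr_deriv (fun s => exp (3 * s) * (W2 s - W1 s))
                   (fun s => exp (3 * s) * (Rfun (V2 s) - Rfun (V1 s))) 0 x Hx
                   ltac:(intros y Hy; apply DE; lra)).
    assert (K2 : exp (3 * 0) * (W2 0 - W1 0) <= exp (3 * x) * (W2 x - W1 x)).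
    { apply K. intros y Hy. assert (0 < exp (3 * y)) by apply exp_pos.
      assert (Rfun (V1 y) <= Rfun (V2 y)) by (apply Rfun_mono; apply HD; lra). nra. }
    rewrite B1, B2 in K2. replace (3 * 0) with 0 in K2 by ring. rewrite exp_0 in K2. lra. }
  intros t Ht.
  assert (K := incr_deriv (fun s => V2 s - V1 s + (n2 - n1) * exp ((-3) * s) / 3)
                 (fun s => W2 s - W1 s - (n2 - n1) * exp ((-3) * s)) 0 t Ht).
  assert (K2 : V2 0 - V1 0 + (n2 - n1) * exp ((-3) * 0) / 3 <= V2 t - V1 t + (n2 - n1) * exp ((-3) * t) / 3).
  { apply K.
    - intros x Hx. eapply is_derive_val. apply dplus. apply DD; lra.
      apply (is_derive_ext (K:=R_AbsRing) (V:=R_NormedModule) (fun s => (n2 - n1) / 3 * exp ((-3) * s))).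
      { intros; cbv beta. rreq. field. }
      auto_derive; auto. rreq. field.
    - intros x Hx. assert (P := Hpsi x ltac:(lra)). assert (E := exp_inv x).
      assert (0 < exp ((-3) * x)) by apply exp_pos.
      assert (exp ((-3) * x) * (n2 - n1) <= exp ((-3) * x) * (exp (3 * x) * (W2 x - W1 x))) by
        (apply Rmult_le_compat_l; lra).
      replace (exp ((-3) * x) * (exp (3 * x) * (W2 x - W1 x))) with (W2 x - W1 x) in H0
        by (rewrite <- Rmult_assoc, (Rmult_comm (exp _)), E; ring).
      lra. }
  rewrite A1, A2 in K2. replace ((-3) * 0) with 0 in K2 by ring. rewrite exp_0 in K2. lra.
Qed.

Lemma approach m n V W : is_sol m n V W -> (forall t, 0 < t -> 0 < W t /\ V t <= -1) ->
  forall eps, 0 < eps -> exists t, 1 <= t /\ -1 - eps < V t.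
Proof.
  intros S H eps He.
  destruct (classic (exists t, 1 <= t /\ -1 - eps < V t)) as [E|E]; auto. exfalso.
  assert (HV : forall t, 1 <= t -> V t <= -1 - eps).
  { intros t Ht. destruct (Rle_or_lt (V t) (-1 - eps)) as [h|h]; auto. exfalso; apply E; exists t; auto. }
  set (d := - Rfun (-1 - eps)).
  assert (Hd : 0 < d) by (unfold d; assert (Rfun (-1 - eps) < 0) by (apply Rfun_neg; lra); lra).
  destruct (H 1 ltac:(lra)) as [W1p _].
  set (X := exp (3 * 1) * W 1 + d * exp (3 * 1) / 3).
  assert (HX : 0 < X).
  { unfold X. assert (0 < exp (3 * 1)) by apply exp_pos. assert (0 < exp (3*1) * W 1) by nra.
    assert (0 < d * exp (3 * 1)) by nra. lra. }
  set (T := 1 + 3 * X / d).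
  assert (HT : 1 <= T) by (unfold T; assert (0 < 3 * X / d) by (apply Rdiv_lt_0_compat; lra); lra).
  assert (K := incr_deriv (fun s => (-1) * (exp (3 * s) * W s + d * exp (3 * s) / 3))
                 (fun s => (-1) * (exp (3 * s) * Rfun (V s) + d * exp (3 * s))) 1 T HT).
  assert (K2 : (-1) * (exp (3 * 1) * W 1 + d * exp (3 * 1) / 3) <= (-1) * (exp (3 * T) * W T + d * exp (3 * T) / 3)).
  { apply K.
    - intros x Hx. apply (is_derive_scal _ x (-1)). apply dplus.
      apply (psi_deriv m n V W x S); lra.
      apply (is_derive_ext (K:=R_AbsRing) (V:=R_NormedModule) (fun s => d / 3 * exp (3 * s))).
      { intros; cbv beta. rreq. field. }
      auto_derive; auto. rreq. field.
    - intros x Hx. assert (Rfun (V x) <= Rfun (-1 - eps)) by (apply Rfun_mono; apply HV; lra).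
      assert (0 < exp (3 * x)) by apply exp_pos. unfold d in *. nra. }
  assert (E3 : 1 + 3 * T <= exp (3 * T)) by apply exp_ineq1_le.
  assert (E4 : 3 * T * d > 9 * X).
  { unfold T. replace (3 * (1 + 3 * X / d) * d) with (3 * d + 9 * X) by (field; lra). lra. }
  assert (E5 : d * exp (3 * T) / 3 > X) by nra.
  assert (exp (3 * T) * W T < 0) by (fold X in K2; lra).
  assert (W T < 0) by (apply (exp_pos_mult_neg (exp (3 * T))); [apply exp_pos| auto]).
  destruct (H T ltac:(lra)). lra.
Qed.

Lemma uniq_lt m n1 n2 : beta0 m n1 -> beta0 m n2 -> n1 < n2 -> False.
Proof.
  intros [V1 [W1 [S1 H1]]] [V2 [W2 [S2 H2]]] Hn.
  assert (C := comparison m n1 n2 V1 W1 V2 W2 S1 S2 Hn).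
  destruct (approach m n1 V1 W1 S1 H1 ((n2 - n1) / 4) ltac:(lra)) as [t [Ht HVt]].
  assert (C1 := C t ltac:(lra)).
  assert (E : exp ((-3) * t) <= exp ((-3) * 1)) by (apply exp_le; lra).
  assert (E2 : exp (3 * 1) * exp ((-3) * 1) = 1) by apply exp_inv.
  assert (E3 := exp3_bounds). replace (3 * 1) with 3 in E2 by ring.
  assert (0 < exp ((-3) * 1)) by apply exp_pos.
  assert (exp ((-3) * 1) <= 1 / 4) by nra.
  destruct (H2 t ltac:(lra)) as [_ HV2].
  assert ((n2 - n1) * (1 - exp ((-3) * t)) / 3 >= (n2 - n1) / 4) by nra.
  lra.
Qed.

Definition Aset m n := exists t, 0 < t /\ solW m n t < 0 /\ solV m n t < -1.
Definition Bset m n := exists t, 0 < t /\ -1 < solV m n t /\ 0 < solW m n t.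

Lemma sq_lt x c : 0 < c -> x * x < c * c -> Rabs x < c.
Proof.
  intros Hc H. destruct (Rlt_or_le (Rabs x) c) as [h|h]; auto.
  assert (E : Rabs x * Rabs x = x * x) by (rewrite <- Rabs_mult; apply Rabs_right; apply Rle_ge, Rle_0_sqr).
  nra.
Qed.

Lemma close_sol m n n' t c : 0 <= t -> 0 < c -> Rabs (n' - n) < c * exp ((-6) * t) ->
  Rabs (solV m n' t - solV m n t) < c /\ Rabs (solW m n' t - solW m n t) < c.
Proof.
  intros Ht Hc Hn.
  assert (K := cont_dep m n' n _ _ _ _ t (sol_exists m n') (sol_exists m n) Ht).
  set (e := exp ((-6) * t)) in *.
  assert (He : 0 < e) by apply exp_pos.
  assert (E1 : (n' - n) * (n' - n) < (c * e) * (c * e)).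
  { assert (E : Rabs (n' - n) * Rabs (n' - n) = (n' - n) * (n' - n))
      by (rewrite <- Rabs_mult; apply Rabs_right; apply Rle_ge, Rle_0_sqr).
    assert (0 <= Rabs (n' - n)) by apply Rabs_pos. nra. }
  assert (E2 : exp (11 * t) * (e * e) <= 1).
  { unfold e. rewrite <- !exp_plus. rewrite <- exp_0. apply exp_le. lra. }
  assert (E3 : exp (11 * t) * ((n' - n) * (n' - n)) < c * c).
  { assert (0 < exp (11 * t)) by apply exp_pos.
    assert (exp (11 * t) * ((n' - n) * (n' - n)) < exp (11 * t) * ((c * e) * (c * e))) by
      (apply Rmult_lt_compat_l; auto).
    assert (exp (11 * t) * ((c * e) * (c * e)) = (c * c) * (exp (11 * t) * (e * e))) by ring.
    assert ((c * c) * (exp (11 * t) * (e * e)) <= c * c) by (assert (0 < c * c) by nra; nra).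
    lra. }
  assert (0 <= (solV m n' t - solV m n t) * (solV m n' t - solV m n t)) by apply Rle_0_sqr.
  assert (0 <= (solW m n' t - solW m n t) * (solW m n' t - solW m n t)) by apply Rle_0_sqr.
  split; apply sq_lt; auto; lra.
Qed.

Lemma A_open m n : Aset m n -> exists e, 0 < e /\ forall y, Rabs (y - n) < e -> Aset m y.
Proof.
  intros [t [Ht [HW HV]]].
  set (c := Rmin (- solW m n t) (-1 - solV m n t)).
  assert (Hc : 0 < c) by (apply Rmin_pos; lra).
  assert (c1 : c <= - solW m n t) by apply Rmin_l. assert (c2 : c <= -1 - solV m n t) by apply Rmin_r.
  exists (c * exp ((-6) * t)). split. assert (0 < exp ((-6) * t)) by apply exp_pos. nra.
  intros y Hy. destruct (close_sol m n y t c ltac:(lra) Hc Hy) as [A B].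
  apply Rabs_def2 in A. apply Rabs_def2 in B.
  exists t. split; auto. split; lra.
Qed.

Lemma B_open m n : Bset m n -> exists e, 0 < e /\ forall y, Rabs (y - n) < e -> Bset m y.
Proof.
  intros [t [Ht [HV HW]]].
  set (c := Rmin (solW m n t) (solV m n t + 1)).
  assert (Hc : 0 < c) by (apply Rmin_pos; lra).
  assert (c1 : c <= solW m n t) by apply Rmin_l. assert (c2 : c <= solV m n t + 1) by apply Rmin_r.
  exists (c * exp ((-6) * t)). split. assert (0 < exp ((-6) * t)) by apply exp_pos. nra.
  intros y Hy. destruct (close_sol m n y t c ltac:(lra) Hc Hy) as [A B].
  apply Rabs_def2 in A. apply Rabs_def2 in B.
  exists t. split; auto. split; lra.
Qed.

Lemma AB_disj m n : Aset m n -> Bset m n -> False.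
Proof.
  intros [ta [Hta [HWa HVa]]] [tb [Htb [HVb HWb]]].
  assert (S := sol_exists m n).
  destruct (invA m n _ _ ta S ltac:(lra) HWa HVa (Rmax ta tb) (Rmax_l _ _)) as [A1 _].
  destruct (invB m n _ _ tb S ltac:(lra) HWb HVb (Rmax ta tb) (Rmax_r _ _)) as [B1 _].
  lra.
Qed.

Lemma A_nonpos m n : m < -1 -> n <= 0 -> Aset m n.
Proof.
  intros Hm Hn. assert (S := sol_exists m n).
  assert (S' := S). destruct S' as [A0 [B0 [HV HW]]].
  destruct (nbhd_lt (solV m n) 0 (-1) (solV_cont m n _ _ 0 S ltac:(lra)) ltac:(rewrite A0; lra))
    as [e2 [He2 H2]].
  destruct Hn as [Hn|Hn].
  - destruct (nbhd_lt (solW m n) 0 0 (solW_cont m n _ _ 0 S ltac:(lra)) ltac:(rewrite B0; lra))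
      as [e1 [He1 H1]].
    set (t := Rmin e1 e2 / 2).
    assert (Rmin e1 e2 <= e1) by apply Rmin_l. assert (Rmin e1 e2 <= e2) by apply Rmin_r.
    assert (0 < Rmin e1 e2) by (apply Rmin_pos; auto).
    exists t. unfold t. split; [lra|]. split.
    apply H1. rewrite Rminus_0_r, Rabs_right; lra.
    apply H2. rewrite Rminus_0_r, Rabs_right; lra.
  - destruct (deriv_right_lt (solW m n) 0 _ (HW 0 ltac:(lra))) as [e1 [He1 H1]].
    { rewrite A0, B0, Hn. assert (Rfun m < 0) by (apply Rfun_neg; auto). lra. }
    set (t := Rmin e1 e2 / 2).
    assert (Rmin e1 e2 <= e1) by apply Rmin_l. assert (Rmin e1 e2 <= e2) by apply Rmin_r.
    assert (0 < Rmin e1 e2) by (apply Rmin_pos; auto).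
    exists t. unfold t. split; [lra|]. split.
    + assert (K := H1 (Rmin e1 e2 / 2) ltac:(lra)). rewrite Rplus_0_l in K. replace (solW m n 0) with 0 in K by lra. exact K.
    + apply H2. rewrite Rminus_0_r, Rabs_right; lra.
Qed.

Lemma B_big m : m < -1 -> Bset m (26 - 4 * m).
Proof.
  intros Hm. set (n := 26 - 4 * m). assert (S := sol_exists m n).
  assert (S' := S). destruct S' as [A0 [B0 [HV HW]]].
  set (V := solV m n) in *. set (W := solW m n) in *.
  assert (Hlow : forall s, 0 <= s -> (n + 2/3) * exp ((-3) * s) - 2/3 <= W s).
  { intros s Hs.
    assert (K := incr_deriv (fun x => exp (3 * x) * W x + 2 / 3 * exp (3 * x))
                 (fun x => exp (3 * x) * Rfun (V x) + 2 * exp (3 * x)) 0 s Hs).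
    assert (K2 : exp (3 * 0) * W 0 + 2 / 3 * exp (3 * 0) <= exp (3 * s) * W s + 2 / 3 * exp (3 * s)).
    { apply K.
      - intros x Hx. apply dplus. apply (psi_deriv m n V W x S); lra.
        auto_derive; auto. rreq; field.
      - intros x Hx. assert (-2 <= Rfun (V x)) by apply Rfun_lb.
        assert (0 < exp (3 * x)) by apply exp_pos. nra. }
    replace (3 * 0) with 0 in K2 by ring. rewrite exp_0, B0 in K2.
    assert (E := exp_inv s). assert (0 < exp ((-3) * s)) by apply exp_pos.
    assert (exp ((-3) * s) * (n * 1 + 2/3 * 1) <= exp ((-3) * s) * (exp (3 * s) * W s + 2 / 3 * exp (3 * s)))
      by (apply Rmult_le_compat_l; lra).
    replace (exp ((-3) * s) * (exp (3 * s) * W s + 2 / 3 * exp (3 * s))) with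
      ((exp (3 * s) * exp ((-3) * s)) * (W s + 2/3)) in H0 by ring.
    rewrite E in H0. lra. }
  assert (K := incr_deriv (fun x => V x + (n + 2/3) * exp ((-3) * x) / 3 + 2 / 3 * x)
                 (fun x => W x - (n + 2/3) * exp ((-3) * x) + 2 / 3) 0 1 ltac:(lra)).
  assert (K2 : V 0 + (n + 2/3) * exp ((-3) * 0) / 3 + 2 / 3 * 0 <=
               V 1 + (n + 2/3) * exp ((-3) * 1) / 3 + 2 / 3 * 1).
  { apply K.
    - intros x Hx. eapply is_derive_val. apply dplus. apply dplus. apply HV; lra.
      apply (is_derive_ext (K:=R_AbsRing) (V:=R_NormedModule) (fun s => (n + 2/3) / 3 * exp ((-3) * s))).
      { intros; cbv beta. rreq. field. }
      auto_derive; auto. auto_derive; auto. rreq; field.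
    - intros x Hx. assert (Hl := Hlow x ltac:(lra)). lra. }
  replace ((-3) * 0) with 0 in K2 by ring. rewrite exp_0, A0 in K2.
  assert (E3 := exp3_bounds). assert (E2 : exp (3 * 1) * exp ((-3) * 1) = 1) by apply exp_inv.
  replace (3 * 1) with 3 in E2 by ring.
  assert (0 < exp ((-3) * 1)) by apply exp_pos.
  assert (e1 : exp ((-3) * 1) <= 1 / 4) by nra.
  assert (e2 : 1 / 27 <= exp ((-3) * 1)) by nra.
  assert (Hl := Hlow 1 ltac:(lra)).
  assert (Hnp : 0 < n + 2/3) by (unfold n; lra).
  assert (f1 : (n + 2/3) * exp ((-3) * 1) <= (n + 2/3) * (1/4)) by (apply Rmult_le_compat_l; lra).
  assert (f2 : (n + 2/3) * (1/27) <= (n + 2/3) * exp ((-3) * 1)) by (apply Rmult_le_compat_l; lra).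
  exists 1. split; [lra|]. unfold n in *. unfold V, W in *. split; lra.
Qed.

Lemma none_beta m n : m < -1 -> ~ Aset m n -> ~ Bset m n -> beta0 m n.
Proof.
  intros Hm HA HB.
  assert (Hn : 0 < n) by (destruct (Rlt_or_le 0 n) as [h|h]; auto; exfalso; apply HA, A_nonpos; auto).
  assert (S := sol_exists m n). assert (S' := S). destruct S' as [A0 [B0 [HV HW]]].
  exists (solV m n), (solW m n). split; auto.
  assert (Main : forall t, 0 <= t -> 0 < solW m n t /\ solV m n t < -1).
  { apply cont_ind.
    - apply nbhd_right. apply nbhd_and.
      apply nbhd_gt. apply (solW_cont m n _ _ 0 S); lra. rewrite B0; auto.
      apply nbhd_lt. apply (solV_cont m n _ _ 0 S); lra. rewrite A0; auto.
    - intros t1 Ht1 Hb.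
      assert (CW : 0 <= solW m n t1).
      { apply (closure_ge (solW m n) 0 t1 0); auto. apply (solW_cont m n _ _ t1 S); lra.
        intros s Hs; apply Hb; auto. }
      assert (CV : solV m n t1 <= -1).
      { apply (closure_le (solV m n) 0 t1 (-1)); auto. apply (solV_cont m n _ _ t1 S); lra.
        intros s Hs; apply Hb; auto. }
      destruct CV as [CV|CV]; destruct CW as [CW|CW].
      + apply nbhd_right. apply nbhd_and.
        apply nbhd_gt; auto. apply (solW_cont m n _ _ t1 S); lra.
        apply nbhd_lt; auto. apply (solV_cont m n _ _ t1 S); lra.
      + exfalso. apply HA.
        destruct (deriv_right_lt (solW m n) t1 _ (HW t1 ltac:(lra))) as [e1 [He1 H1]].
        { rewrite <- CW. assert (Rfun (solV m n t1) < 0) by (apply Rfun_neg; auto). lra. }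
        destruct (nbhd_lt (solV m n) t1 (-1) (solV_cont m n _ _ t1 S ltac:(lra)) CV) as [e2 [He2 H2]].
        assert (Rmin e1 e2 <= e1) by apply Rmin_l. assert (Rmin e1 e2 <= e2) by apply Rmin_r.
        assert (0 < Rmin e1 e2) by (apply Rmin_pos; auto).
        exists (t1 + Rmin e1 e2 / 2). split; [lra|]. split.
        * assert (K := H1 (Rmin e1 e2 / 2) ltac:(lra)). lra.
        * apply H2. apply Rabs_def1; lra.
      + exfalso. apply HB.
        destruct (deriv_right_gt (solV m n) t1 _ (HV t1 ltac:(lra)) CW) as [e1 [He1 H1]].
        destruct (nbhd_gt (solW m n) t1 0 (solW_cont m n _ _ t1 S ltac:(lra)) CW) as [e2 [He2 H2]].
        assert (Rmin e1 e2 <= e1) by apply Rmin_l. assert (Rmin e1 e2 <= e2) by apply Rmin_r.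
        assert (0 < Rmin e1 e2) by (apply Rmin_pos; auto).
        exists (t1 + Rmin e1 e2 / 2). split; [lra|]. split.
        * assert (K := H1 (Rmin e1 e2 / 2) ltac:(lra)). lra.
        * apply H2. apply Rabs_def1; lra.
      + exfalso. assert (m = -1) by (apply (back_uniq m n _ _ t1 S); auto; lra). lra. }
  intros t Ht. destruct (Main t ltac:(lra)). split; lra.
Qed.

Theorem lemma4p5 (m : R) (hm : m < -1) : exists! n : R, beta0 m n.
Proof.
  destruct (connected (Aset m) (Bset m) 0 (26 - 4 * m) ltac:(lra)
    (A_nonpos m 0 hm ltac:(lra)) (B_big m hm) (A_open m) (B_open m) (AB_disj m)) as [n [HA HB]].
  exists n. split. apply none_beta; auto.
  intros n' Hn'. assert (Hb := none_beta m n hm HA HB).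
  destruct (Rtotal_order n n') as [h|[h|h]]; auto.
  exfalso; apply (uniq_lt m n n'); auto.
  exfalso; apply (uniq_lt m n' n); auto.
Qed.
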